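(* Let $H\in(1/2,1)$, $c\in(0,2^{2H-2})$ and $\lambda\in(0,c)$. For every $n\in\mathbb{N}$ and every pair of disjoint sets $A,B\subseteq\{1,2,\dots,n\}$, \[ p_n\,c^{|A|-1}\,D^\circ_H(A,B)>0 . \]
   Context: For $n\in\mathbb{N}$ put $p_n=\lambda n^{2H-2}$. For a finite set $A=\{i_0<i_1<\dots<i_k\}\subset\mathbb{N}\cup\{0\}$ define $L^\circ_H(A)=\prod_{j=1}^{k}|i_j-i_{j-1}|^{2H-2}$; if $|A|=1$ set $L^\circ_H(A)=1$, and set $L^\circ_H(\emptyset)=c/p_n$. For disjoint finite sets $A,B\subset\mathbb{N}\cup\{0\}$ define $D^\circ_H(A,B)=\sum_{B'\subseteq B}(-1)^{|B'|}c^{|B'|}L^\circ_H(A\cup B')$ (in particular $D^\circ_H(A,\emptyset)=L^\circ_H(A)$). *)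

(* Defs.v *)
From HB Require Import structures.
From mathcomp Require Import all_boot all_order all_algebra.
From mathcomp Require Import all_classical all_reals all_analysis.
Set Implicit Arguments. Unset Strict Implicit. Unset Printing Implicit Defensive.
Import Order.TTheory GRing.Theory Num.Theory.
Local Open Scope ring_scope.

Definition pn (R : realType) (H lam : R) (n : nat) : R :=
  lam * ((n%:R : R) `^ (2 * H - 2)).

Definition Lseq (R : realType) (H c lam : R) (n : nat) (s : seq nat) : R :=
  match s with
  | [::] => c / pn H lam n
  | x :: t => \prod_(d <- pairmap (fun a b => (b - a)%N) x t)
                ((d%:R : R) `^ (2 * H - 2))
  end.

Definition Lcirc (R : realType) (H c lam : R) (n : nat) (A : {set 'I_n.+1}) : R :=
  Lseq H c lam n (sort leq [seq val i | i <- enum A]).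

Definition Dcirc (R : realType) (H c lam : R) (n : nat) (A B : {set 'I_n.+1}) : R :=
  \sum_(B' in powerset B) (-1) ^+ #|B'| * c ^+ #|B'| * Lcirc H c lam (A :|: B').

(* Main.v *)
Require Import Defs.
From HB Require Import structures.
From mathcomp Require Import all_boot all_order all_algebra.
From mathcomp Require Import all_classical all_reals all_analysis.
From mathcomp Require Import ring lra zify.
Import Order.TTheory GRing.Theory Num.Theory.
Local Open Scope ring_scope.

Section Renewal.
Variable R : realType.
Variables (H c lam : R) (n : nat).
Hypotheses (hH : 1 / 2 < H) (hH1 : H < 1) (hc : 0 < c)
  (hc2 : c < (2 : R) `^ (2 * H - 2)) (hl : 0 < lam) (hlc : lam < c) (hn : (0 < n)%N).

Let al := 2 * H - 2.
Lemma al_lt0 : al < 0. Proof. rewrite /al. move: hH1. lra. Qed.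

Lemma powR_decr (x y : R) : 0 < x -> x < y -> y `^ al < x `^ al.
Proof.
move=> x0 xy; have y0 : 0 < y by apply: lt_trans xy.
rewrite /powR (gt_eqF x0) (gt_eqF y0) ltr_expR.
have : ln x < ln y by rewrite ltr_ln // posrE.
rewrite ltr_nM2l //; exact: al_lt0.
Qed.

Lemma powR_decr_le (x y : R) : 0 < x -> x <= y -> y `^ al <= x `^ al.
Proof.
move=> x0; rewrite le_eqVlt => /orP[/eqP->//|xy].
exact/ltW/powR_decr.
Qed.

Lemma two_al_lt1 : (2:R) `^ al < 1.
Proof. have h12 : (1:R) < 2 by lra.
have := @powR_decr 1 2 ltr01 h12. by rewrite powR1. Qed.

Lemma c_lt1 : c < 1.
Proof. have := two_al_lt1; move: hc2; rewrite -/al; lra. Qed.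

Definition U (d : nat) : R := if d == 0%N then 1 else c * (d%:R) `^ al.

Lemma U_gt0 d : 0 < U d.
Proof. rewrite /U; case: ifP => [//|/negbT d0]; apply: mulr_gt0 => //; apply: powR_gt0; rewrite ltr0n; lia. Qed.

Lemma powR_natM (a b : nat) : (a%:R : R) `^ al * (b%:R) `^ al = ((a * b)%N%:R) `^ al.
Proof. by rewrite natrM powRM. Qed.

Lemma powR_nat_decr (a b : nat) : (0 < a)%N -> (a < b)%N -> (b%:R : R) `^ al < (a%:R) `^ al.
Proof. move=> a0 ab; apply: powR_decr; rewrite ?ltr0n ?ltr_nat //. Qed.

Lemma powR_nat_decr_le (a b : nat) : (0 < a)%N -> (a <= b)%N -> (b%:R : R) `^ al <= (a%:R) `^ al.
Proof. move=> a0 ab; apply: powR_decr_le; rewrite ?ltr0n ?ler_nat //. Qed.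

Lemma powR_nat_le1 (m : nat) : (0 < m)%N -> (m%:R : R) `^ al <= 1.
Proof. move=> m0; have := @powR_nat_decr_le 1 m isT m0. by rewrite powR1. Qed.

Lemma U_lt1 m : (0 < m)%N -> U m < 1.
Proof.
move=> m0; rewrite /U ifN; last by lia.
have := @powR_nat_le1 m m0; have := c_lt1; have := powR_ge0 (m%:R : R) al; move: hc; nra.
Qed.

Lemma U_le j m : (j <= m)%N -> U m <= U j.
Proof.
move=> jm; case: (posnP j) => [->|j0].
  case: (posnP m) => [->//|m0]; exact/ltW/U_lt1.
rewrite /U !ifN; try lia.
by rewrite ler_pM2l //; apply: powR_nat_decr_le.
Qed.

Lemma U_ratio j m : (j < m)%N -> U j.+1 * U m < U m.+1 * U j.
Proof.
move=> jm; have m0 : (0 < m)%N by lia.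
case: (posnP j) => [->|j0].
  rewrite /U /= !ifN; try lia.
  have h1 : (1%:R : R) `^ al = 1 by rewrite powR1.
  have h2 : (2%:R : R) `^ al * (m%:R) `^ al <= (m.+1%:R) `^ al.
    rewrite powR_natM; apply: powR_nat_decr_le => //; lia.
  have h3 : c * (m%:R : R) `^ al < (2%:R : R) `^ al * (m%:R) `^ al.
    rewrite ltr_pM2r; last by apply: powR_gt0; rewrite ltr0n.
    by move: hc2; rewrite -/al.
  rewrite h1; move: h2 h3 hc; nra.
rewrite /U !ifN; try lia.
rewrite mulrACA [X in _ < X]mulrACA ltr_pM2l ?mulr_gt0 //.
rewrite !powR_natM; apply: powR_nat_decr; nia.
Qed.

Lemma ratio_pos j m : (j < m)%N -> 0 < U m.+1 / U m * U j - U j.+1.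
Proof.
move=> jm; have hu := U_gt0 m.
have -> : U m.+1 / U m * U j - U j.+1 = (U m.+1 * U j - U j.+1 * U m) / U m.
  by field; rewrite gt_eqF.
by apply: divr_gt0 => //; rewrite subr_gt0; apply: U_ratio.
Qed.

Fixpoint fa (k d : nat) : R :=
  match k with
  | 0 => 0
  | k'.+1 => U d - \sum_(1 <= j < d) U j * fa k' (d - j)
  end.

Definition f (d : nat) : R := fa d.+1 d.

Lemma fa_S k d : fa k.+1 d = U d - \sum_(1 <= j < d) U j * fa k (d - j).
Proof. by []. Qed.

Lemma fa_step k m : (m < k)%N -> fa k.+1 m = fa k m.
Proof.
elim: k m => [//|k IH] m mk.
rewrite fa_S [RHS]fa_S; congr (_ - _); apply: eq_big_nat => j /andP[j1 jm].
rewrite IH //; lia.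
Qed.

Lemma fa_stable m d : fa (m.+1 + d) m = fa m.+1 m.
Proof.
elim: d => [|d IH]; first by rewrite addn0.
by rewrite addnS fa_step ?IH //; lia.
Qed.

Lemma f_eq d : f d = U d - \sum_(1 <= j < d) U j * f (d - j).
Proof.
rewrite /f fa_S; congr (_ - _); apply: eq_big_nat => j /andP[j1 jd].
have E : ((d - j).+1 + (j - 1))%N = d by lia.
by rewrite /f -[in RHS](fa_stable (d - j) (j - 1)) E.
Qed.

Lemma U0 : U 0 = 1. Proof. by rewrite /U. Qed.

Lemma U_eq d : (0 < d)%N -> U d = \sum_(0 <= j < d) U j * f (d - j).
Proof.
move=> d0; rewrite big_ltn // subn0 U0 mul1r.
have := f_eq d; lra.
Qed.

Lemma f_gt0 d : (0 < d)%N -> 0 < f d.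
Proof.
elim/ltn_ind: d => d IH d0.
case: (ltnP d 2) => d2.
  have -> : d = 1%N by lia.
  rewrite f_eq big_geq // subr0 /U /=.
  have h1 : (1%:R : R) `^ al = 1 by rewrite powR1.
  by rewrite h1 mulr1.
have -> : d = (d.-1).+1 by lia.
set m := d.-1.
have m0 : (0 < m)%N by rewrite /m; lia.
have Hf : f m.+1 = \sum_(0 <= j < m) (U m.+1 / U m * U j - U j.+1) * f (m - j).
  rewrite f_eq.
  have -> : \sum_(1 <= j < m.+1) U j * f (m.+1 - j) = \sum_(0 <= j < m) U j.+1 * f (m - j).
    by rewrite big_add1 /=; apply: eq_big_nat => j _; rewrite subSS.
  have E1 : U m.+1 = U m.+1 / U m * \sum_(0 <= j < m) U j * f (m - j).
    by rewrite -(@U_eq m m0) divfK // gt_eqF // U_gt0.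
  rewrite [in LHS]E1 mulr_sumr -sumrB; apply: eq_big_nat => j _.
  by rewrite mulrA mulrBl.
rewrite Hf big_ltn // subn0.
apply: ltr_pwDl.
  apply: mulr_gt0; last by apply: IH; rewrite /m; lia.
  exact: ratio_pos.
rewrite big_nat_cond; apply: sumr_ge0 => j /andP[/andP[j1 jm] _]; apply: mulr_ge0; last first.
  apply/ltW/IH; rewrite /m; lia.
exact/ltW/ratio_pos.
Qed.

Definition Rr (m : nat) : R := 1 - \sum_(0 <= j < m) f j.+1.

Lemma sumf_rev m : \sum_(0 <= j < m) f (m - j) = \sum_(0 <= j < m) f j.+1.
Proof.
rewrite big_nat_rev; apply: eq_big_nat => j /andP[_ jm]; congr f; lia.
Qed.

Lemma Rr_gt0 m : 0 < Rr m.
Proof.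
case: (posnP m) => [->|m0]; first by rewrite /Rr big_geq // subr0.
rewrite /Rr -sumf_rev subr_gt0.
have hU := @U_eq m m0.
rewrite big_ltn // subn0 U0 mul1r in hU.
have hs : U m * \sum_(1 <= j < m) f (m - j) <= \sum_(1 <= j < m) U j * f (m - j).
  rewrite mulr_sumr big_nat_cond [X in _ <= X]big_nat_cond.
  apply: ler_sum => j /andP[/andP[j1 jm] _]; apply: ler_wpM2r.
    apply/ltW/f_gt0; lia.
  apply: U_le; lia.
rewrite big_ltn // subn0.
have hf := @f_gt0 m m0; have hu1 := @U_lt1 m m0; have hu := U_gt0 m.
have : U m * (f m + \sum_(1 <= j < m) f (m - j)) < U m by nra.
by rewrite -[X in _ < X]mulr1 ltr_pM2l.
Qed.

Lemma Rr0 : Rr 0 = 1.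
Proof. by rewrite /Rr big_geq // subr0. Qed.

Lemma Rr_S m : Rr m.+1 = Rr m - f m.+1.
Proof. by rewrite /Rr big_nat_recr //=; ring. Qed.

Lemma Tm_eq m : \sum_(0 <= j < m.+1) U j * Rr (m - j) = 1.
Proof.
elim: m => [|m IH]; first by rewrite big_nat1 U0 subnn Rr0 mulr1.
rewrite big_nat_recr // subnn Rr0 mulr1.
have -> : \sum_(0 <= j < m.+1) U j * Rr (m.+1 - j)
        = \sum_(0 <= j < m.+1) U j * Rr (m - j) - \sum_(0 <= j < m.+1) U j * f (m.+1 - j).
  rewrite -sumrB; apply: eq_big_nat => j /andP[_ jm].
  have -> : (m.+1 - j = (m - j).+1)%N by lia.
  by rewrite Rr_S mulrBr.
by rewrite IH -U_eq // /= subrK.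
Qed.

Lemma sumRr_le m : U m * \sum_(0 <= i < m.+1) Rr i <= 1.
Proof.
rewrite -[X in _ <= X](Tm_eq m) big_nat_rev mulr_sumr /=.
rewrite big_nat_cond [X in _ <= X]big_nat_cond.
apply: ler_sum => j /andP[/andP[_ jm] _].
rewrite add0n subSS; apply: ler_wpM2r; first exact/ltW/Rr_gt0.
apply: U_le; lia.
Qed.

Let P := pn H lam n.

Lemma P_gt0 : 0 < P.
Proof. rewrite /P /pn; apply: mulr_gt0 => //; apply: powR_gt0; rewrite ltr0n; exact: hn. Qed.

Definition K (y z : nat) : R := if y == 0%N then P else U (z - y).
Definition phi (y z : nat) : R := if y == 0%N then P * Rr z.-1 else f (z - y).
Definition rho (w N : nat) : R := 1 - \sum_(w.+1 <= z < N.+1) phi w z.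

Lemma phi_gt0 y z : (y < z)%N -> 0 < phi y z.
Proof.
move=> yz; rewrite /phi; case: ifP => _.
  exact: mulr_gt0 P_gt0 (Rr_gt0 _).
apply: f_gt0; lia.
Qed.

Lemma renewal y z : (y < z)%N ->
  K y z = phi y z + \sum_(y.+1 <= w < z) K y w * phi w z.
Proof.
move=> yz; case: (posnP y) => [->|y0].
  have -> : \sum_(1 <= w < z) K 0 w * phi w z = P * \sum_(0 <= j < z.-1) f j.+1.
    rewrite -sumf_rev mulr_sumr big_add1; apply: eq_big_nat => j /andP[_ jz].
    by rewrite /K /phi /=; congr (_ * f _); lia.
  rewrite /K /phi eqxx /Rr; ring.
have -> : \sum_(y.+1 <= w < z) K y w * phi w z = \sum_(1 <= j < z - y) U j * f (z - y - j).
  rewrite -add1n big_addn; apply: eq_big_nat => j /andP[j1 jz].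
  rewrite /K /phi !ifN; try lia.
  congr (U _ * f _); lia.
rewrite /K /phi !ifN; try lia.
rewrite f_eq; ring.
Qed.

Lemma rho_gt0 w : (w <= n)%N -> 0 < rho w n.
Proof.
move=> wn; case: (posnP w) => [->|w0].
  rewrite /rho big_add1 /=.
  have -> : \sum_(0 <= i < n) phi 0 i.+1 = P * \sum_(0 <= i < n) Rr i.
    by rewrite mulr_sumr; apply: eq_big_nat => i _; rewrite /phi.
  have hS := sumRr_le n.
  rewrite big_nat_recr //= in hS.
  have hRn := Rr_gt0 n.
  have hpos : 0 <= \sum_(0 <= i < n) Rr i.
    by apply: sumr_ge0 => i _; exact/ltW/Rr_gt0.
  move: hS hRn hpos; rewrite /U ifN; last by lia.
  rewrite /P /pn -/al.
  set x := (n%:R : R) `^ al; set S := \sum_(0 <= i < n) Rr i.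
  have hx : 0 < x by apply: powR_gt0; rewrite ltr0n; exact: hn.
  move=> h1 h2 h3.
  have h4 : 0 <= (c - lam) * (x * S).
    apply: mulr_ge0; [move: hlc; lra | exact: mulr_ge0 (ltW hx) h3].
  have h5 : 0 < c * x * Rr n by rewrite !mulr_gt0.
  move: h1 h4 h5; nra.
rewrite /rho.
have -> : \sum_(w.+1 <= z < n.+1) phi w z = \sum_(0 <= j < n - w) f j.+1.
  rewrite -add1n big_addn big_add1 /=.
  have -> : (n.+1 - w).-1 = (n - w)%N by lia.
  apply: eq_big_nat => j _; rewrite /phi ifN; last by lia.
  congr f; lia.
exact: Rr_gt0.
Qed.

Local Notation T := 'I_n.+1.

Fixpoint Wseq (x : nat) (s : seq nat) : R :=
  match s with [::] => 1 | y :: t => K x y * Wseq y t end.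

Definition sl (S : {set T}) : seq nat := sort leq [seq val i | i <- enum S].
Definition W (S : {set T}) : R := Wseq 0 (sl S).
Definition F (A B : {set T}) : R :=
  \sum_(B' in powerset B) (-1) ^+ #|B'| * W (A :|: B').

Lemma Wseq_rcons x s z : Wseq x (rcons s z) = Wseq x s * K (last x s) z.
Proof. by elim: s x => [|y t IH] x /=; rewrite ?mul1r ?mulr1 ?IH ?mulrA. Qed.

Lemma mem_sl (S : {set T}) x : (x \in sl S) = [exists i in S, nat_of_ord i == x].
Proof.
rewrite /sl mem_sort; apply/idP/idP.
  move=> /mapP [i]; rewrite mem_enum => iS ->; apply/existsP; exists i; by rewrite iS eqxx.
move=> /existsP [i /andP[iS /eqP <-]]; apply/mapP; exists i; by rewrite ?mem_enum.
Qed.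

Lemma sl_sorted (S : {set T}) : sorted ltn (sl S).
Proof.
rewrite ltn_sorted_uniq_leq sort_uniq sort_sorted ?andbT; last exact: leq_total.
by rewrite map_inj_uniq ?enum_uniq //; apply: val_inj.
Qed.

Lemma sl_add (S : {set T}) (z : T) : (forall i, i \in S -> (nat_of_ord i < nat_of_ord z)%N) ->
  sl (z |: S) = rcons (sl S) (nat_of_ord z).
Proof.
move=> hz; apply: (irr_sorted_eq ltn_trans ltnn); first exact: sl_sorted.
  have := sl_sorted S; case E: (sl S) => [|x t] //= hs.
  rewrite rcons_path hs /=.
  have : last x t \in sl S by rewrite E mem_last.
  by rewrite mem_sl => /existsP[i /andP[iS /eqP <-]]; apply: hz.
move=> x; rewrite mem_rcons in_cons !mem_sl; apply/existsP/orP.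
  move=> [i /andP[]]; rewrite in_setU1 => /orP[/eqP -> zx|iS ix]; first by left; rewrite eq_sym.
  by right; apply/existsP; exists i; rewrite iS.
case=> [/eqP xz|/existsP[i /andP[iS ix]]]. by subst x; exists z; rewrite setU11 eqxx.
by exists i; rewrite in_setU1 iS orbT.
Qed.

Lemma sl_set0 : sl (@finset.set0 _) = [::].
Proof. by rewrite /sl enum_set0. Qed.

Lemma W_add (S : {set T}) (z : T) : (forall i, i \in S -> (nat_of_ord i < nat_of_ord z)%N) ->
  W (z |: S) = W S * K (last 0%N (sl S)) z.
Proof. by move=> hz; rewrite /W sl_add // Wseq_rcons. Qed.

Lemma last_sl (S : {set T}) (p : T) : p \in S ->
  (forall i, i \in S -> i != p -> (nat_of_ord i < nat_of_ord p)%N) -> last 0%N (sl S) = nat_of_ord p.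
Proof.
move=> pS hp; rewrite -(finset.setD1K pS) sl_add ?last_rcons //.
move=> i; rewrite in_setD1 => /andP[ip iS]; exact: hp.
Qed.

Lemma W0 : W (@finset.set0 _) = 1.
Proof. by rewrite /W sl_set0. Qed.

Lemma F_split (A B : {set T}) (p : T) : p \notin B ->
  F A (p |: B) = F A B - F (p |: A) B.
Proof.
move=> pB; rewrite /F (bigID (fun B' : {set T} => p \in B')) /= addrC.
congr (_ + _).
  apply: eq_bigl => B'; rewrite !powersetE; apply/andP/idP.
    move=> [/fintype.subsetP sB pB']; apply/fintype.subsetP => x xB'.
    have := sB x xB'; rewrite in_setU1 => /orP[/eqP xp|//].
    by move: pB'; rewrite -xp xB'.
  move=> /fintype.subsetP sB; split; last by apply/negP => /sB; rewrite (negbTE pB).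
  by apply/fintype.subsetP => x /sB xB; rewrite in_setU1 xB orbT.
rewrite (reindex_onto (fun C : {set T} => p |: C) (fun D => D :\ p)) /=; last first.
  by move=> D /andP[_ pD]; rewrite finset.setD1K.
rewrite -sumrN; apply: eq_big => C.
  rewrite !powersetE setU11 andbT; apply/andP/idP.
    move=> [/fintype.subsetP sC /eqP eC]; apply/fintype.subsetP => x xC.
    have xp : x != p.
      by apply/eqP => xp; move: eC; rewrite -xp => eC; move: xC; rewrite -eC in_setD1 eqxx.
    have xpC : x \in p |: C by rewrite in_setU1 xC orbT.
    by have := sC x xpC; rewrite in_setU1 (negbTE xp).
  move=> /fintype.subsetP sC; have pC : p \notin C by apply/negP => /sC; rewrite (negbTE pB).
  split; last by rewrite finset.setU1K.
  by apply/fintype.subsetP => x; rewrite !in_setU1 => /orP[->//|/sC ->]; rewrite orbT.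
move=> /andP[_ /eqP eC].
have pC : p \notin C by rewrite -eC setD11.
rewrite finset.cardsU1 pC /= exprS mulN1r mulNr; congr (- (_ * W _)).
by rewrite finset.setUCA finset.setUA.
Qed.

Lemma F_append (A B : {set T}) (p z : T) : p \in A ->
  (forall i, i \in A :|: B -> i != p -> (nat_of_ord i < nat_of_ord p)%N) -> (nat_of_ord p < nat_of_ord z)%N ->
  F (z |: A) B = F A B * K p z.
Proof.
move=> pA hp pz; rewrite /F mulr_suml; apply: eq_bigr => B'.
rewrite powersetE => /fintype.subsetP sB.
have hS : forall i, i \in A :|: B' -> i != p -> (nat_of_ord i < nat_of_ord p)%N.
  move=> i; rewrite finset.in_setU => /orP[iA|iB] ip; apply: hp => //; rewrite finset.in_setU ?iA //.
  by rewrite sB ?orbT.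
rewrite -finset.setUA W_add; last first.
  move=> i iS; case: (eqVneq i p) => [->//|ip]; exact: ltn_trans (hS i iS ip) pz.
rewrite (@last_sl _ p) ?mulrA // finset.in_setU pA //.
Qed.

Lemma F00 : F (@finset.set0 _) (@finset.set0 _) = 1.
Proof.
by rewrite /F finset.powerset0 big_set1 cards0 expr0 mul1r finset.setU0 W0.
Qed.

Lemma F0 (z : T) : F (z |: @finset.set0 _) (@finset.set0 _) = K 0 z.
Proof.
rewrite /F finset.powerset0 big_set1 cards0 expr0 mul1r finset.setU0 W_add; last by move=> i; rewrite inE.
by rewrite W0 sl_set0 mul1r.
Qed.

Lemma sum_gt0_nat (g : nat -> R) N w0 : (forall w, (w < N)%N -> 0 <= g w) -> (w0 < N)%N -> 0 < g w0 ->
  0 < \sum_(0 <= w < N) g w.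
Proof.
move=> g0 wN gw; rewrite big_mkord (bigD1 (Ordinal wN)) //=.
apply: (lt_le_trans gw); rewrite lerDl; apply: sumr_ge0 => i _; exact: g0 _ (ltn_ord i).
Qed.

Lemma rho_pp p : rho p p = 1.
Proof. by rewrite /rho big_geq // subr0. Qed.

Lemma rho_recr w p : (w < p)%N -> rho w p = rho w p.-1 - phi w p.
Proof.
move=> wp; rewrite /rho prednK; last by lia.
by rewrite big_nat_recr //=; ring.
Qed.

Definition Claim p := forall A B : {set T}, [disjoint A & B] ->
  (forall i, i \in A :|: B -> (0 < nat_of_ord i < p)%N) ->
  exists s : nat -> R, (forall w, 0 <= s w) /\ (exists w, (w < p)%N /\ 0 < s w) /\
  (forall z : T, (p <= nat_of_ord z)%N -> F (z |: A) B = \sum_(0 <= w < p) s w * phi w z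
       + \sum_(p <= w < nat_of_ord z) F (inord w |: A) B * phi w z) /\
  F A B = \sum_(0 <= w < p) s w * rho w p.-1.

Lemma claim1 : Claim 1.
Proof.
move=> A B _ hAB.
have eA : A = @finset.set0 _.
  apply/setP => i; rewrite inE; apply/negbTE/negP => iA.
  have : i \in A :|: B by rewrite finset.in_setU iA.
  by move/hAB; lia.
have eB : B = @finset.set0 _.
  apply/setP => i; rewrite inE; apply/negbTE/negP => iB.
  have : i \in A :|: B by rewrite finset.in_setU iB orbT.
  by move/hAB; lia.
subst A B.
exists (fun w => if w == 0%N then 1 else 0); split.
  by move=> w; case: ifP.
split; first by exists 0%N.
split; last by rewrite F00 big_nat1 /= rho_pp mulr1.
move=> z z1; rewrite F0 big_nat1 /= mul1r.
have -> : \sum_(1 <= w < nat_of_ord z) F (inord w |: @finset.set0 _) (@finset.set0 _) * phi w z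
        = \sum_(1 <= w < nat_of_ord z) K 0 w * phi w z.
  apply: eq_big_nat => w /andP[_ wz]; rewrite F0 inordK //.
  exact: ltn_trans wz (ltn_ord z).
exact: renewal.
Qed.

Lemma zt (p : nat) (g : nat -> R) (s : nat -> R) :
    \sum_(0 <= w < p.+1) (if (w < p)%N then s w else 0) * g w = \sum_(0 <= w < p) s w * g w.
Proof.
rewrite big_nat_recr //= ltnn mul0r addr0.
by apply: eq_big_nat => w /andP[_ wp]; rewrite wp.
Qed.

Lemma zt2 (p : nat) (g : nat -> R) (s : nat -> R) G :
    \sum_(0 <= w < p.+1) (if (w < p)%N then s w else G) * g w = \sum_(0 <= w < p) s w * g w + G * g p.
Proof.
rewrite big_nat_recr //= ltnn; congr (_ + _).
by apply: eq_big_nat => w /andP[_ wp]; rewrite wp.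
Qed.

Lemma nat_h (a b : nat) : (0 < a < b.+1)%N -> (a < b)%N -> (0 < a < b)%N.
Proof. lia. Qed.

Lemma claim_step p : (0 < p)%N -> (p <= n)%N -> Claim p -> Claim p.+1.
Proof.
move=> p0 pn IH A B dAB hAB.
set pp : T := inord p.
have vpp : nat_of_ord pp = p by rewrite /pp inordK.
have hlt : forall i, i \in A :|: B -> i != pp -> (nat_of_ord i < p)%N.
  move=> i iAB ipp; have := hAB i iAB; have : nat_of_ord i != p.
    by apply: contra ipp => /eqP ip; apply/eqP/val_inj; rewrite /= vpp.
  lia.
have vin : forall w (z : T), (w < nat_of_ord z)%N -> nat_of_ord (inord w : T) = w.
  by move=> w z wz; rewrite inordK //; exact: ltn_trans wz (ltn_ord z).
have emp : forall (g : nat -> R), \sum_(p <= w < p) g w = 0 by move=> g; rewrite big_geq.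
case: (boolP (pp \in A)) => ppA.
  set A0 := A :\ pp.
  have dA0 : [disjoint A0 & B] by apply: disjointWl dAB; apply: subD1set.
  have hA0 : forall i, i \in A0 :|: B -> (0 < nat_of_ord i < p)%N.
    move=> i; rewrite finset.in_setU in_setD1 => /orP[/andP[ipp iA]|iB].
      have iAB : i \in A :|: B by rewrite finset.in_setU iA.
      exact: nat_h (hAB i iAB) (hlt i iAB ipp).
    have ipp : i != pp by apply: contraTneq iB => ->; rewrite (disjointFr dAB ppA).
    have iAB : i \in A :|: B by rewrite finset.in_setU iB orbT.
    exact: nat_h (hAB i iAB) (hlt i iAB ipp).
  have [s [s0 [[w0 [w0p sw0]] [hi hii]]]] := IH A0 B dA0 hA0.
  have eA : pp |: A0 = A by rewrite finset.setD1K.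
  have FA : F A B = \sum_(0 <= w < p) s w * phi w p.
    by rewrite -eA hi vpp // emp addr0.
  have FApos : 0 < F A B.
    rewrite FA; apply: (@sum_gt0_nat (fun w => s w * phi w p) p w0 _ w0p).
      by move=> w wp; apply: mulr_ge0 => //; apply/ltW/phi_gt0.
    by apply: mulr_gt0 => //; apply: phi_gt0.
  have hSA : forall i, i \in A :|: B -> i != pp -> (nat_of_ord i < nat_of_ord pp)%N.
    by move=> i iAB ipp; rewrite vpp; apply: hlt.
  exists (fun w => if w == p then F A B else 0); split.
    by move=> w; case: ifP => // _; exact: ltW.
  split; first by exists p; rewrite ltnSn eqxx.
  split; last first.
    rewrite big_nat_recr //= eqxx rho_pp mulr1 big1_seq ?add0r // => w.
    by rewrite mem_index_iota => /andP[_ /andP[_ wp]]; rewrite ifN ?mul0r // neq_ltn wp.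
  move=> z pz; rewrite (@F_append A B pp z ppA hSA); last by rewrite vpp.
  rewrite big_nat_recr //= eqxx big1_seq ?add0r; last first.
    by move=> w; rewrite mem_index_iota => /andP[_ /andP[_ wp]]; rewrite ifN ?mul0r // neq_ltn wp.
  have -> : \sum_(p.+1 <= w < z) F (inord w |: A) B * phi w z
          = \sum_(p.+1 <= w < z) F A B * K p w * phi w z.
    apply: eq_big_nat => w /andP[pw wz].
    rewrite (@F_append A B pp (inord w) ppA hSA); last by rewrite vpp (vin _ _ wz).
    by rewrite vpp (vin _ _ wz).
  rewrite vpp (@renewal p z pz) mulrDr; congr (_ + _); rewrite mulr_sumr.
  by apply: eq_bigr => w _; rewrite mulrA.
have zero_tail : forall (g : nat -> R) (s : nat -> R),
    \sum_(0 <= w < p.+1) (if (w < p)%N then s w else 0) * g w = \sum_(0 <= w < p) s w * g w.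
  by move=> g s; apply: zt.
case: (boolP (pp \in B)) => ppB.
  set B0 := B :\ pp.
  have dB0 : [disjoint A & B0] by apply: disjointWr dAB; apply: subD1set.
  have hB0 : forall i, i \in A :|: B0 -> (0 < nat_of_ord i < p)%N.
    move=> i; rewrite finset.in_setU in_setD1 => /orP[iA|/andP[ipp iB]].
      have ipp : i != pp by apply: contraNneq ppA => <-.
      have iAB : i \in A :|: B by rewrite finset.in_setU iA.
      exact: nat_h (hAB i iAB) (hlt i iAB ipp).
    have iAB : i \in A :|: B by rewrite finset.in_setU iB orbT.
    exact: nat_h (hAB i iAB) (hlt i iAB ipp).
  have [s [s0 [[w0 [w0p sw0]] [hi hii]]]] := IH A B0 dB0 hB0.
  have eB : pp |: B0 = B by rewrite finset.setD1K.
  have ppB0 : pp \notin B0 by rewrite setD11.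
  set G0 := F (pp |: A) B0.
  have hG0 : G0 = \sum_(0 <= w < p) s w * phi w p by rewrite /G0 hi vpp // emp addr0.
  have hSA : forall i, i \in (pp |: A) :|: B0 -> i != pp -> (nat_of_ord i < nat_of_ord pp)%N.
    move=> i; rewrite -finset.setUA in_setU1 => /orP[/eqP->|iAB0]; first by rewrite eqxx.
    by move=> ipp; rewrite vpp; case/andP: (hB0 i iAB0).
  have hFw : forall w : T, (p < w)%N -> F (w |: A) B = F (w |: A) B0 - G0 * K p w.
    move=> w pw; rewrite -eB F_split // finset.setUCA.
    rewrite (@F_append (pp |: A) B0 pp w (setU11 _ _) hSA); last by rewrite vpp.
    by rewrite -/G0 vpp.
  exists (fun w => if (w < p)%N then s w else 0); split.
    by move=> w; case: ifP.
  split; first by exists w0; rewrite w0p ltnW.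
  split; last first.
    rewrite -eB F_split // hii -/G0 hG0 zero_tail -sumrB; apply: eq_big_nat => w /andP[_ wp].
    rewrite succnK (@rho_recr w p wp); ring.
  move=> z pz; rewrite zero_tail (hFw z pz) hi ?(ltnW pz) // (big_ltn pz) -/pp -/G0.
  have -> : \sum_(p.+1 <= w < z) F (inord w |: A) B * phi w z
     = \sum_(p.+1 <= w < z) F (inord w |: A) B0 * phi w z - G0 * \sum_(p.+1 <= w < z) K p w * phi w z.
    rewrite mulr_sumr -sumrB; apply: eq_big_nat => w /andP[pw wz].
    rewrite hFw; last by rewrite (vin _ _ wz).
    by rewrite (vin _ _ wz) mulrBl mulrA.
  rewrite (@renewal p z pz); ring.
have hAB' : forall i, i \in A :|: B -> (0 < nat_of_ord i < p)%N.
  move=> i iAB; have ipp : i != pp.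
    by apply/eqP => eip; move: iAB; rewrite eip finset.in_setU (negbTE ppA) (negbTE ppB).
  exact: nat_h (hAB i iAB) (hlt i iAB ipp).
have [s [s0 [[w0 [w0p sw0]] [hi hii]]]] := IH A B dAB hAB'.
set G := F (pp |: A) B.
have hG : G = \sum_(0 <= w < p) s w * phi w p by rewrite /G hi vpp // emp addr0.
have G0 : 0 <= G.
  rewrite hG big_nat_cond; apply: sumr_ge0 => w /andP[/andP[_ wp] _].
  by apply: mulr_ge0 => //; apply/ltW/phi_gt0.
exists (fun w => if (w < p)%N then s w else G); split.
  by move=> w; case: ifP.
split; first by exists w0; rewrite w0p ltnW.
split.
  move=> z pz; rewrite hi ?(ltnW pz) // (big_ltn pz) -/pp -/G zt2 addrA.
  by [].
rewrite succnK zt2 rho_pp mulr1 hii hG -big_split /=.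
apply: eq_big_nat => w /andP[_ wp]; rewrite (@rho_recr w p wp); ring.
Qed.

Lemma claim_all p : (0 < p)%N -> (p <= n.+1)%N -> Claim p.
Proof.
elim: p => [//|p IHp] _ pn1.
case: (posnP p) => [->|p0]; first exact: claim1.
apply: claim_step => //; apply: IHp => //; exact: ltnW.
Qed.

Lemma F_pos (A B : {set T}) : ord0 \notin A -> ord0 \notin B -> [disjoint A & B] -> 0 < F A B.
Proof.
move=> hA0 hB0 dAB.
have hAB : forall i, i \in A :|: B -> (0 < nat_of_ord i < n.+1)%N.
  move=> i iAB; rewrite ltn_ord andbT lt0n; apply/eqP => i0.
  have ei : i = ord0 by apply: val_inj.
  by move: iAB; rewrite ei finset.in_setU (negbTE hA0) (negbTE hB0).
have [s [s0 [[w0 [w0p sw0]] [_ hii]]]] := @claim_all n.+1 isT (leqnn _) A B dAB hAB.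
rewrite hii /=; apply: (@sum_gt0_nat (fun w => s w * rho w n) n.+1 w0) => //.
  by move=> w wn; apply: mulr_ge0 => //; apply/ltW/rho_gt0.
by apply: mulr_gt0 => //; apply: rho_gt0.
Qed.

Lemma Wseq_L y t : (0 < y)%N -> path ltn y t ->
  Wseq y t = c ^+ size t * \prod_(d <- pairmap (fun a b => (b - a)%N) y t) ((d%:R : R) `^ (2 * H - 2)).
Proof.
elim: t y => [|z t IH] y y0 /=; first by rewrite big_nil expr0 mul1r.
move=> /andP[yz pt]; rewrite big_cons IH //; last by lia.
rewrite /K ifN; last by lia.
rewrite /U ifN; last by lia.
rewrite exprS -/al; ring.
Qed.

Lemma size_sl (S : {set T}) : size (sl S) = #|S|.
Proof. by rewrite /sl size_sort size_map cardE. Qed.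

Lemma term_eq (A B' : {set T}) : ord0 \notin A -> ord0 \notin B' -> [disjoint A & B'] ->
  P * c ^ (#|A|%:Z - 1) * ((-1) ^+ #|B'| * c ^+ #|B'| * Lcirc H c lam (A :|: B'))
  = (-1) ^+ #|B'| * W (A :|: B').
Proof.
move=> hA0 hB0 dAB.
have hc0 : c != 0 by rewrite gt_eqF.
have hP0 : P != 0 by rewrite gt_eqF // P_gt0.
have hcard : #|A :|: B'| = (#|A| + #|B'|)%N.
  by apply/eqP; rewrite (leq_card_setU A B').2.
rewrite /Lcirc /W -/(sl _).
have := size_sl (A :|: B'); have := sl_sorted (A :|: B').
have hpos : forall x, x \in sl (A :|: B') -> (0 < x)%N.
  move=> x; rewrite mem_sl => /existsP[i /andP[iS /eqP <-]].
  rewrite lt0n; apply/eqP => i0; have ei : i = ord0 by apply: val_inj.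
  by move: iS; rewrite ei finset.in_setU (negbTE hA0) (negbTE hB0).
case E: (sl (A :|: B')) hpos => [|y t] hpos /= hs hsz.
  have hA : #|A| = 0%N by move: hsz; rewrite hcard; lia.
  have hB : #|B'| = 0%N by move: hsz; rewrite hcard; lia.
  rewrite hA hB /= expr0 -/P.
  have -> : c ^ ((0:int) - 1) = c^-1 by rewrite sub0r exprN1.
  by rewrite expr0; field; rewrite hP0 hc0.
have y0 : (0 < y)%N by apply: hpos; rewrite inE eqxx.
rewrite /K eqxx (@Wseq_L y t y0 hs) -/P.
have hk : (#|A|%:Z - 1 + #|B'|%:Z = (size t)%:Z)%R.
  move: hsz; rewrite hcard => hsz; lia.
have Ec : c ^ (#|A|%:Z - 1) * c ^+ #|B'| = c ^+ size t.
  have -> : c ^+ #|B'| = c ^ (#|B'|%:Z) by [].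
  have -> : c ^+ size t = c ^ ((size t)%:Z) by [].
  by rewrite -expfzDr // hk.
rewrite -Ec; set X := c ^ (#|A|%:Z - 1); ring.
Qed.

Lemma bridge (A B : {set T}) : ord0 \notin A -> ord0 \notin B -> [disjoint A & B] ->
  pn H lam n * c ^ (#|A|%:Z - 1) * Dcirc H c lam A B = F A B.
Proof.
move=> hA0 hB0 dAB; rewrite /Dcirc /F -/P mulr_sumr; apply: eq_bigr => B'.
rewrite powersetE => sB.
apply: term_eq => //.
  by apply: contra hB0; apply: (fintype.subsetP sB).
exact: disjointWr sB dAB.
Qed.

End Renewal.

Theorem lemma2p3 (R : realType) (H c lam : R)
  (hH : 1 / 2 < H) (hH1 : H < 1)
  (hc : 0 < c) (hc2 : c < (2 : R) `^ (2 * H - 2))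
  (hl : 0 < lam) (hlc : lam < c)
  (n : nat) (hn : (0 < n)%N) (A B : {set 'I_n.+1})
  (hA0 : ord0 \notin A) (hB0 : ord0 \notin B) (hAB : [disjoint A & B]) :
  0 < pn H lam n * c ^ (#|A|%:Z - 1) * Dcirc H c lam A B.
Proof.
rewrite bridge //.
by apply: F_pos.
Qed.
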